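(* Let $p$ be a prime and let $G$ be a finite $p$-group. Then the number of maximal abelian subgroups of $G$ is congruent to $1$ modulo $p$.
   Context: A subgroup $A$ of a group $G$ is called maximal abelian if $A$ is abelian and is not properly contained in any abelian subgroup of $G$, i.e. $A$ is maximal with respect to inclusion among the abelian subgroups of $G$. (Such subgroups need not be maximal subgroups of $G$ and may have different orders.) *)

(* Defs.v *)
From mathcomp Require Import all_boot all_fingroup all_solvable.
Set Implicit Arguments. Unset Strict Implicit. Unset Printing Implicit Defensive.

Definition maxAbelian (gT : finGroupType) (G : {set gT}) : {set {group gT}} :=
  [set A : {group gT} | [max A | (A \subset G) && abelian A]%g].

(* Main.v *)
Require Import Defs.
From mathcomp Require Import all_boot all_fingroup all_solvable.
Set Implicit Arguments. Unset Strict Implicit.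
Local Open Scope group_scope.

Lemma maxab_cent (gT : finGroupType) (H A : {group gT}) x :
  A \in maxAbelian H -> x \in H -> x \in 'C(A) -> x \in A.
Proof.
rewrite inE => /maxgroupP [/andP [sAH abA] maxA] Hx cAx.
have := maxA (A <*> <[x]>)%G.
rewrite join_subG sAH cycle_subG Hx abelianY abA cycle_abelian.
rewrite cycle_subG cAx.
idtac.
move=> /(_ isT (joing_subl _ _)) <-.
by rewrite mem_gen // inE cycle_id orbT.
Qed.

Lemma maxab_sub (gT : finGroupType) (H A : {group gT}) :
  A \in maxAbelian H -> A \subset H.
Proof. by rewrite inE => /maxgroupP [/andP []]. Qed.

Lemma maxab_abel (gT : finGroupType) (H A : {group gT}) :
  A \in maxAbelian H -> abelian A.
Proof. by rewrite inE => /maxgroupP [/andP []]. Qed.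

Lemma maxab_center (gT : finGroupType) (H A : {group gT}) :
  A \in maxAbelian H -> 'Z(H) \subset A.
Proof.
move=> mA; apply/subsetP => z /centerP [Hz cz].
apply: (maxab_cent mA Hz); apply/centP => a Aa.
by apply: cz; apply: (subsetP (maxab_sub mA)).
Qed.

Lemma maxab_cent1 (gT : finGroupType) (G : {group gT}) g : g \in G ->
  [set A in maxAbelian G | g \in A] = maxAbelian 'C_G[g].
Proof.
move=> Gg; apply/setP => A; rewrite !inE; apply/andP/idP.
- case=> /maxgroupP [/andP [sAG abA] maxA] gA.
  have sAC : A \subset 'C_G[g].
    by rewrite subsetI sAG sub_cent1; apply: (subsetP abA).
  apply/maxgroupP; split; first by rewrite sAC abA.
  move=> B /andP [sBC abB] sAB; apply: maxA => //.
  by rewrite abB (subset_trans sBC) // subsetIl.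
- move=> mA.
  have mA' : A \in maxAbelian 'C_G[g] by rewrite inE.
  have gA : g \in A.
    apply: (maxab_cent mA'); first by rewrite inE Gg cent1id.
    by rewrite -sub_cent1; apply: subset_trans (maxab_sub mA') (subsetIr _ _).
  split=> //; move/maxgroupP: mA => [/andP [sAC abA] maxA].
  apply/maxgroupP; split; first by rewrite abA (subset_trans sAC) ?subsetIl.
  move=> B /andP [sBG abB] sAB; apply: maxA => //.
  rewrite abB subsetI sBG sub_cent1 andbT /=.
  exact: (subsetP abB) (subsetP sAB _ gA).
Qed.

Lemma maxab_abelian (gT : finGroupType) (G : {group gT}) :
  abelian G -> maxAbelian G = [set G].
Proof.
move=> abG; apply/setP => A; rewrite !inE; apply/idP/eqP.
- move=> /maxgroupP [/andP [sAG _] maxA].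
  by have := maxA G; rewrite subxx abG => /(_ isT sAG) e; apply: val_inj; rewrite /= e.
- move=> ->; apply/maxgroupP; split; first by rewrite subxx abG.
  move=> B /andP [sBG _] sGB; by apply/eqP; rewrite eqEsubset sBG.
Qed.

Lemma card_setI_sum (T : finType) (X Y : {set T}) :
  #|X :&: Y| = \sum_(x in X) (x \in Y).
Proof.
rewrite -sum1_card big_mkcond [RHS]big_mkcond /=; apply: eq_bigr => x _.
by rewrite inE; case: (x \in X); case: (x \in Y).
Qed.

Lemma card_sep_sum (T : finType) (X : {set T}) (P : pred T) :
  #|[set a in X | P a]| = \sum_(a in X) P a.
Proof.
rewrite -sum1_card big_mkcond [RHS]big_mkcond /=; apply: eq_bigr => x _.
by rewrite inE; case: (x \in X); case: (P x).
Qed.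

Theorem mainTheorem1 (gT : finGroupType) (p : nat) (G : {group gT}) :
  prime p -> (p.-group G)%g -> #|maxAbelian G| = 1 %[mod p].
Proof.
move=> pr_p.
elim: {G}_.+1 {-2}G (ltnSn #|G|) => // n IH G leGn pG.
case abG: (abelian G); first by rewrite maxab_abelian // cards1.
set Z := 'Z(G); set S := maxAbelian G.
have nZG : Z <| G := center_normal G.
have nZG' : G \subset 'N(Z) := normal_norm nZG.
have sZC : Z \subset 'C(G) := subsetIr _ _.
have ntQ : p %| #|G / Z|.
  have [] := pgroup_pdiv (quotient_pgroup Z pG) => //.
  apply/negP => /eqP QZ1.
  have : G / Z \subset [1] by rewrite QZ1.
  rewrite quotient_sub1 // => sGZ.
  by move: abG; rewrite /abelian (subset_trans sGZ sZC).
have ntA A : A \in S -> p %| #|A / Z|.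
  move=> SA.
  have [] := pgroup_pdiv (quotient_pgroup Z (pgroupS (maxab_sub SA) pG)) => //.
  apply/negP => /eqP QZ1.
  have : A / Z \subset [1] by rewrite QZ1.
  rewrite quotient_sub1; last exact: subset_trans (maxab_sub SA) nZG'.
  move=> sAZ.
  have sGA : G \subset A.
    apply/subsetP => g Gg; apply: (maxab_cent SA Gg).
    have : G \subset 'C(A) by rewrite centsC (subset_trans sAZ sZC).
    by move/subsetP; apply.
  by move: abG; rewrite (abelianS sGA (maxab_abel SA)).
have memQ A x : A \in S -> x \in G / Z -> (x \in A / Z) = (repr x \in A).
  move=> SA Qx.
  have nZA : Z <| A.
    by apply: normalS (maxab_center SA) (maxab_sub SA) nZG.
  rewrite -{2}(quotientGK nZA); apply/idP/morphpreP.
    move=> Ax; split; [exact: repr_coset_norm | ].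
    by move: Ax; rewrite -{1}(coset_reprK x).
  by case=> _ H; rewrite -(coset_reprK x); exact: H.
have key : \sum_(x in (G / Z)^#) #|[set A in S | x \in A / Z]|
         = \sum_(A in S) #|(A / Z)^#|.
  transitivity (\sum_(x in (G / Z)^#) \sum_(A in S) (x \in A / Z)).
    by apply: eq_bigr => x _; rewrite card_sep_sum.
  rewrite exchange_big /=; apply: eq_bigr => A SA.
  rewrite -card_setI_sum; apply: eq_card => x; rewrite !inE.
  case Ax: (x \in A / Z); rewrite ?andbF ?andbT //.
  by rewrite (subsetP (quotientS Z (maxab_sub SA)) _ Ax) andbT.
have e1 : \sum_(x in (G / Z)^#) #|[set A in S | x \in A / Z]|
          = #|(G / Z)^#| %[mod p].
  rewrite -modn_summ (eq_bigr (fun _ => 1 %% p)); last first.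
    move=> x /setD1P [x1 Qx].
    set g := repr x.
    have Gg : g \in G.
      rewrite -(quotientGK nZG); apply/morphpreP.
      by split; [exact: repr_coset_norm | move: Qx; rewrite -{1}(coset_reprK x)].
    have Zg : g \notin Z.
      apply/negP => Zg; move/negP: x1; apply.
      by rewrite -(coset_reprK x) coset_id.
    have -> : [set A in S | x \in A / Z] = [set A in S | g \in A].
      by apply/setP => A; rewrite [LHS]inE [RHS]inE; case SA: (A \in S) => //=; exact: memQ.
    rewrite maxab_cent1 //.
    have prC : 'C_G[g] \proper G.
      rewrite properE subsetIl /=; apply/negP => sGC; move/negP: Zg; apply.
      rewrite /Z inE Gg /= -sub_cent1.
      exact: subset_trans sGC (subsetIr _ _).
    apply: IH; first exact: leq_trans (proper_card prC) leGn.
    exact: pgroupS (subsetIl _ _) pG.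
  by rewrite modn_summ sum1_card.
have e2 : p %| \sum_(A in S) #|A / Z| by apply: dvdn_sum.
have e3 : \sum_(A in S) #|A / Z| = \sum_(A in S) #|(A / Z)^#| + #|S|.
  rewrite -sum1_card -big_split /=; apply: eq_bigr => A _.
  by rewrite (cardsD1 1) group1 addnC.
have e4 : #|G / Z| = #|(G / Z)^#| + 1.
  by rewrite (cardsD1 1) group1 addnC.
move: e2 ntQ; rewrite e3 -key e4 /dvdn -modnDml e1 modnDml => /eqP h1 /eqP h2.
apply/eqP; rewrite -(eqn_modDl #|(G / Z)^#|) h1 h2 //.
Qed.
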